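(* Let $G$ be a connected graph with adjacency matrix $A$ and positive degrees, and let $e=(i,j)$, $i\ne j$, $a_{ij}>0$, be an edge. (a) If $e$ is not a cut-edge, then $\lim_{r\to 0^+}c_r(e)=c(e)$, where $c(e)=K(D^{-1}\widehat A)-K(D^{-1}A)$. (b) If $e$ is a cut-edge, then $\lim_{r\to 0^+} r\,c_r(e)=1$ and the limit $\lim_{r\to 0^+}\big(r^{-1}-c_r(e)\big)$ exists and is finite. Consequently, for the filtered score $\tilde c_r(e)$, the limit $\lim_{r\to 0^+}\tilde c_r(e)$ is finite in all cases and equals $c(e)$ when $e$ is not a cut-edge.
   Context: Graphs are undirected and possibly weighted on vertex set $\{1,\dots,n\}$, with symmetric nonnegative adjacency matrix $A=(a_{k\ell})$; $d=A\mathbf 1$, $D=\mathrm{diag}(d)$, $\|d\|_1=\sum_kd_k$, $D^{\pm1/2}=\mathrm{diag}(d_k^{\pm1/2})$; $e_k$ is the $k$-th column of the identity and $\mathbf 1$ the all-ones vector. For an irreducible row-stochastic matrix $Q$, $K(Q)=\sum_{\ell=2}^n 1/(1-\lambda_\ell)$ where $1=\lambda_1,\dots,\lambda_n$ are its eigenvalues (the Kemeny constant, i.e. the expected first passage time to a state drawn from the stationary distribution). With $v=e_i-e_j$ and $\widehat A=A+a_{ij}vv^T$ (deleting edge $e$ and adding loops of weight $a_{ij}$ at $i$ and $j$; $\widehat A\mathbf 1=d$). The edge $e$ is a cut-edge if deleting it disconnects $G$. For $r>0$ and symmetric nonnegative $B$ with $B\mathbf 1=d$, $K_r(B)=\operatorname{Tr}\Big(\big((1+r)I-D^{-1/2}BD^{-1/2}+\tfrac{1}{\|d\|_1}D^{1/2}\mathbf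 1\mathbf 1^TD^{1/2}\big)^{-1}\Big)-(1+r)^{-1}$; the regularized score is $c_r(e)=K_r(\widehat A)-K_r(A)$, and the filtered score is $\tilde c_r(e)=r^{-1}-c_r(e)$ if $e$ is a cut-edge and $\tilde c_r(e)=c_r(e)$ otherwise. *)

(* Defs.v *)
From HB Require Import structures.
From mathcomp Require Import all_boot all_order all_algebra.
From mathcomp Require Import all_classical all_reals all_analysis.
From mathcomp Require Import complex.
Set Implicit Arguments. Unset Strict Implicit. Unset Printing Implicit Defensive.
Import Order.TTheory GRing.Theory Num.Theory.
Local Open Scope ring_scope.
Local Open Scope complex_scope.

Section Defs.
Variable R : realType.
Variable n : nat.
Implicit Types (A B Q : 'M[R]_n).

Definition deg A (k : 'I_n) : R := \sum_(l < n) A k l.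
Definition vol A : R := \sum_(k < n) deg A k.
Definition Dmat A : 'M[R]_n := diag_mx (\row_k deg A k).
Definition Dsqrt A : 'M[R]_n := diag_mx (\row_k Num.sqrt (deg A k)).
Definition Dinvsqrt A : 'M[R]_n := diag_mx (\row_k (Num.sqrt (deg A k))^-1).
Definition ones : 'cV[R]_n := const_mx 1.

Definition evec (i j : 'I_n) : 'cV[R]_n := delta_mx i 0 - delta_mx j 0.
Definition Ahat A (i j : 'I_n) : 'M[R]_n := A + A i j *: (evec i j *m (evec i j)^T).

(* the graph with edge {k,l} iff a_kl > 0 (loops irrelevant for connectivity) *)
Definition adjrel A : rel 'I_n := fun k l => 0 < A k l.
Definition connectedG A : Prop := forall k l : 'I_n, connect (adjrel A) k l.
Definition delete_edge A (i j : 'I_n) : 'M[R]_n :=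
  \matrix_(k, l) (if ((k == i) && (l == j)) || ((k == j) && (l == i)) then 0 else A k l).
Definition cut_edge A (i j : 'I_n) : Prop := ~ connectedG (delete_edge A i j).

(* eigenvalues (with algebraic multiplicity, in C = R[i]) of a real matrix *)
Definition eigs Q : seq R[i] :=
  sval (closed_field_poly_normal (char_poly (map_mx (fun x : R => x%:C) Q))).
(* Kemeny constant: sum over the eigenvalues other than (one copy of) lambda_1 = 1
   of 1/(1 - lambda); the sum is real (non-real eigenvalues come in conjugate
   pairs), we take its real part. *)
Definition Kemeny Q : R := complex.Re (\sum_(z <- rem 1 (eigs Q)) (1 - z)^-1).

Definition Kreg A (r : R) B : R :=
  \tr (invmx ((1 + r)%:M - Dinvsqrt A *m B *m Dinvsqrt A
               + (vol A)^-1 *: (Dsqrt A *m ones *m ones^T *m Dsqrt A)))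
  - (1 + r)^-1.

Definition c_reg A (i j : 'I_n) (r : R) : R := Kreg A r (Ahat A i j) - Kreg A r A.
Definition c_score A (i j : 'I_n) : R :=
  Kemeny (invmx (Dmat A) *m Ahat A i j) - Kemeny (invmx (Dmat A) *m A).

Definition c_filtered A (i j : 'I_n) (r : R) : R :=
  if `[< cut_edge A i j >] then r^-1 - c_reg A i j r else c_reg A i j r.
End Defs.

(* Main.v *)
Require Import Defs.
From HB Require Import structures.
From mathcomp Require Import all_boot all_order all_algebra.
From mathcomp Require Import all_classical all_reals all_analysis.
From mathcomp Require Import complex.
From mathcomp.algebra_tactics Require Import ring lra.
From mathcomp Require Import zify.
Import Order.TTheory GRing.Theory Num.Theory numFieldNormedType.Exports.

Module Part1.
Set Implicit Arguments. Unset Strict Implicit. Unset Printing Implicit Defensive.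
Local Open Scope ring_scope.

Lemma rank_diag (F : fieldType) n (v : 'rV[F]_n) :
  \rank (diag_mx v) = (\sum_(k < n) ((v 0 k != 0)%R : nat))%N.
Proof.
elim: n v => [|n IH] v; first by rewrite big_ord0 flatmx0 mxrank0.
have := diag_mx_row (lsubmx (v : 'rV_(1 + n))) (rsubmx (v : 'rV_(1 + n))).
rewrite hsubmxK => E.
change (\rank (diag_mx (v : 'rV_(1+n))) = (\sum_(k < n.+1) ((v 0 k != 0)%R : nat))%N).
rewrite E rank_diag_block_mx IH big_ord_recl; congr (_ + _)%N.
  have -> : diag_mx (lsubmx (v : 'rV_(1 + n))) = (v 0 0)%:M.
    by apply/matrixP=> i j; rewrite !ord1 !mxE /= mulr1n; congr (v _ _); apply: val_inj.
  case: eqP => [->|/eqP nz]; first by rewrite raddf0 mxrank0.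
  by rewrite mxrank_unit // unitmxE det_scalar1 unitfE.
apply: eq_bigr => k _; rewrite !mxE; congr (nat_of_bool (v _ _ != 0)); by apply: val_inj.
Qed.

Lemma char_poly_similar (F : comUnitRingType) n (P X : 'M[F]_n) :
  P \in unitmx -> char_poly (invmx P *m X *m P) = char_poly X.
Proof.
move=> Pu.
pose Pp := map_mx (@polyC F) P; pose Pi := map_mx (@polyC F) (invmx P).
have PiPp : Pi *m Pp = 1%:M by rewrite -map_mxM mulVmx // map_mx1.
rewrite /char_poly.
have -> : char_poly_mx (invmx P *m X *m P) = Pi *m char_poly_mx X *m Pp.
  rewrite /char_poly_mx !map_mxM mulmxBr mulmxBl -/Pp -/Pi.
  rewrite mul_mx_scalar -scalemxAl PiPp -scalemx1.
  by rewrite scale1r scalemx1.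
rewrite !det_mulmx mulrC mulrA -det_mulmx.
rewrite [Pp *m Pi]mulmx1C ?PiPp // det1 mul1r.
by [].
Qed.

End Part1.
Import Part1.

Module Part2.
Set Implicit Arguments. Unset Strict Implicit. Unset Printing Implicit Defensive.
Local Open Scope ring_scope.

Section Spec.
Variable R : rcfType.
Variable n : nat.
Local Notation C := (R[i]).
Local Notation toC := (real_complex R).
Variable N : 'M[R]_n.
Hypothesis Nsym : N^T = N.

Let NC := map_mx toC N.
Let U := spectralmx NC.
Let la := spectral_diag NC.
Definition lamR (k : 'I_n) : R := complex.Re (la 0 k).

Lemma toC_real (x : R) : toC x \is Num.real.
Proof. by apply/complex_realP; exists x. Qed.

Lemma NC_herm : NC \is hermsymmx.
Proof.
apply/is_hermitianmxP; rewrite expr0 scale1r; apply/matrixP => k l.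
rewrite !mxE conj_Creal ?toC_real //.
by rewrite -{1}Nsym mxE.
Qed.

Lemma U_unit : U \in unitmx.
Proof. exact: spectral_unit. Qed.

Lemma NC_spec : NC = invmx U *m diag_mx la *m U.
Proof. exact/orthomx_spectralP/hermitian_normalmx/NC_herm. Qed.

Lemma la_real k : la 0 k = toC (lamR k).
Proof.
have /mxOverP := hermitian_spectral_diag_real NC_herm.
by move=> /(_ 0 k) /RRe_real.
Qed.


Lemma charpoly_NC :
  char_poly NC = \prod_(k < n) ('X - (toC (lamR k))%:P).
Proof.
rewrite NC_spec char_poly_similar ?U_unit // char_poly_trig ?diag_mx_is_trig //.
by apply: eq_bigr => k _; rewrite mxE eqxx mulr1n la_real.
Qed.

Lemma mapY (s : R) : map_mx toC (s%:M - N) =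
  invmx U *m diag_mx (\row_k toC (s - lamR k)) *m U.
Proof.
rewrite map_mxB map_scalar_mx -/NC NC_spec.
have -> : (toC s)%:M = invmx U *m (toC s)%:M *m U :> 'M[C]_n.
  by rewrite mul_mx_scalar -scalemxAl mulVmx ?U_unit // scalemx1.
rewrite -mulmxBl -mulmxBr; congr (_ *m _ *m _).
apply/matrixP => k l; rewrite !mxE la_real -mulrnBl rmorphB.
by [].
Qed.

Lemma conj_mul (D1 D2 : 'M[C]_n) :
  (invmx U *m D1 *m U) *m (invmx U *m D2 *m U) = invmx U *m (D1 *m D2) *m U.
Proof.
by rewrite !mulmxA mulmxK ?U_unit // -!mulmxA.
Qed.

Lemma trace_inv (s : R) : (forall k, lamR k != s) ->
  s%:M - N \in unitmx /\ \tr (invmx (s%:M - N)) = \sum_k (s - lamR k)^-1.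
Proof.
move=> hs.
pose W := invmx U *m diag_mx (\row_k toC ((s - lamR k)^-1)) *m U.
have YW : map_mx toC (s%:M - N) *m W = 1%:M.
  rewrite mapY /W conj_mul mulmx_diag.
  have -> : \row_j ((\row_k toC (s - lamR k)) 0 j * (\row_k toC ((s - lamR k)^-1)) 0 j)
     = const_mx 1.
    apply/rowP => j; rewrite !mxE -rmorphM mulfV ?rmorph1 //.
    by rewrite subr_eq0 eq_sym.
  by rewrite diag_const_mx mul_mx_scalar scale1r mulVmx ?U_unit.
have /andP[] : (map_mx toC (s%:M - N) \in unitmx) && (W \in unitmx).
  by have [-> ->] := mulmx1_unit YW.
rewrite map_unitmx => Yu _; split => //.
apply: (@complexI R).
rewrite -trace_map_mx map_invmx.
have -> : invmx (map_mx toC (s%:M - N)) = W.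
  by rewrite -[RHS](mulKmx (_ : map_mx toC (s%:M - N) \in unitmx)) ?YW ?mulmx1 // map_unitmx.
rewrite /W mxtrace_mulC.
rewrite mulKVmx ?U_unit // mxtrace_diag rmorph_sum.
by apply: eq_bigr => k _; rewrite mxE.
Qed.

Lemma rank_IN : \rank (1%:M - N) = (\sum_k ((lamR k != 1)%R : nat))%N.
Proof.
rewrite -(mxrank_map toC) mapY mxrankMfree ?row_free_unit ?U_unit //.
rewrite eqmxMfull ?row_full_unit ?unitmx_inv ?U_unit // rank_diag.
apply: eq_bigr => k _; rewrite mxE fmorph_eq0 subr_eq0 eq_sym //.
Qed.

End Spec.

End Part2.
Import Part2.

Module Part3.
Set Implicit Arguments. Unset Strict Implicit. Unset Printing Implicit Defensive.
Local Open Scope ring_scope.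
Local Open Scope classical_set_scope.

Section Mat.
Variable R : realType.
Variable n : nat.
Variable A : 'M[R]_n.
Hypothesis dpos : forall k, 0 < deg A k.
Hypothesis volpos : 0 < vol A.

Local Notation Sd := (Dinvsqrt A).
Local Notation Td := (Dsqrt A).
Local Notation w := (Dsqrt A *m ones R n).

Lemma sqrt_neq0 k : Num.sqrt (deg A k) != 0.
Proof. by rewrite gt_eqF // sqrtr_gt0 dpos. Qed.

Lemma TdSd : Td *m Sd = 1%:M.
Proof.
rewrite /Dsqrt /Dinvsqrt mulmx_diag -diag_const_mx; congr diag_mx.
by apply/rowP => k; rewrite !mxE mulfV ?sqrt_neq0.
Qed.

Lemma SdTd : Sd *m Td = 1%:M.
Proof.
rewrite /Dsqrt /Dinvsqrt mulmx_diag -diag_const_mx; congr diag_mx.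
by apply/rowP => k; rewrite !mxE mulVf ?sqrt_neq0.
Qed.

Lemma SdD : Sd *m Dmat A = Td.
Proof.
rewrite /Dsqrt /Dinvsqrt /Dmat mulmx_diag; congr diag_mx.
apply/rowP => k; rewrite !mxE.
have h := sqrt_neq0 k.
rewrite -{2}(@sqr_sqrtr _ (deg A k)) ?ltW ?dpos // expr2 mulrA mulVf //.
by rewrite mul1r.
Qed.

Lemma Sd_sym : Sd^T = Sd. Proof. exact: tr_diag_mx. Qed.
Lemma Td_sym : Td^T = Td. Proof. exact: tr_diag_mx. Qed.

Lemma invD : invmx (Dmat A) = Sd *m Sd.
Proof.
have E : Sd *m Sd *m Dmat A = 1%:M by rewrite -mulmxA SdD SdTd.
have [_ Du] := mulmx1_unit E.
by rewrite -[invmx _]mul1mx -E -(mulmxA (Sd *m Sd)) mulmxV // mulmx1.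
Qed.

Lemma Sd_unit : Sd \in unitmx.
Proof. by have [] := mulmx1_unit SdTd. Qed.

Lemma invTd : invmx Td = Sd.
Proof.
have [Tu _] := mulmx1_unit TdSd.
by rewrite -[invmx _]mul1mx -SdTd -(mulmxA Sd) mulmxV // mulmx1.
Qed.

Lemma w_entry k a : w k a = Num.sqrt (deg A k).
Proof.
rewrite !mxE (bigD1 k) //= big1 ?addr0; last first.
  by move=> l /negbTE lk; rewrite !mxE eq_sym lk mulr0n mul0r.
by rewrite !mxE eqxx mulr1n mulr1.
Qed.

Lemma wtw : w^T *m w = (vol A)%:M.
Proof.
apply/matrixP => a b; rewrite !ord1 [LHS]mxE [RHS]mxE /vol mulr1n.
apply: eq_bigr => k _.
rewrite [w^T _ _]mxE !w_entry -expr2 sqr_sqrtr // ltW //.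
Qed.

Variable B : 'M[R]_n.
Hypothesis Bsym : B^T = B.
Hypothesis Bdeg : forall k, \sum_l B k l = deg A k.

Definition NB := Sd *m B *m Sd.

Lemma NB_sym : NB^T = NB.
Proof. by rewrite /NB !trmx_mul Sd_sym Bsym mulmxA. Qed.

Lemma Bones : B *m ones R n = Dmat A *m ones R n.
Proof.
apply/matrixP => k a; rewrite [RHS]mxE (bigD1 k) //= big1 ?addr0; last first.
  by move=> l /negbTE lk; rewrite !mxE eq_sym lk mulr0n mul0r.
rewrite !mxE eqxx mulr1n mulr1 -Bdeg; apply: eq_bigr => l _; rewrite !mxE mulr1 //.
Qed.

Lemma NBw : NB *m w = w.
Proof.
by rewrite /NB -!mulmxA (mulmxA Sd Td) SdTd mul1mx Bones mulmxA SdD.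
Qed.

Lemma wNB : w^T *m NB = w^T.
Proof. by rewrite -[NB]NB_sym -trmx_mul NBw. Qed.


Lemma neq_near (x : R) : \forall r \near 0^'+, x != 1 + r.
Proof.
case: (leP x 1) => hx.
  apply: filterS (nbhs_right_gt 0) => r r0.
  by rewrite lt_eqF //; lra.
have h : 0 < x - 1 by lra.
apply: filterS (nbhs_right_lt h) => r hr.
by rewrite gt_eqF //; lra.
Qed.

Lemma Kreg_tr r : 0 < r -> ((1 + r)%:M - NB) \in unitmx ->
  Kreg A r B = \tr (invmx ((1 + r)%:M - NB)) - r^-1.
Proof.
move=> r0 Yu.
set Y := (1 + r)%:M - NB.
set W := w *m w^T.
have rn0 : r != 0 by rewrite gt_eqF.
have vn0 : vol A != 0 by rewrite gt_eqF.
have r1n0 : 1 + r != 0 by rewrite gt_eqF // ltr_wpDr // ltW.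
have Yw : Y *m w = r *: w.
  by rewrite mulmxBl NBw mul_scalar_mx scalerDl scale1r addrAC subrr add0r.
have wY : w^T *m Y = r *: w^T.
  by rewrite mulmxBr wNB mul_mx_scalar scalerDl scale1r addrAC subrr add0r.
have wYi : w^T *m invmx Y = r^-1 *: w^T.
  have E : w^T = r^-1 *: (w^T *m Y) by rewrite wY scalerA mulVf ?scale1r.
  by rewrite {1}E -scalemxAl mulmxK.
have YW : Y *m W = r *: W by rewrite /W mulmxA Yw -scalemxAl.
have WYi : W *m invmx Y = r^-1 *: W by rewrite /W -mulmxA wYi -scalemxAr.
have WW : W *m W = vol A *: W.
  by rewrite /W mulmxA -(mulmxA w) wtw mul_mx_scalar -scalemxAl.
have Pw : Td *m ones R n *m (ones R n)^T *m Td = W.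
  by rewrite /W trmx_mul Td_sym mulmxA.
set c := (vol A * r * (1 + r))^-1.
set M := Y + (vol A)^-1 *: W.
set Mi := invmx Y - c *: W.
have trW : \tr W = vol A by rewrite /W mxtrace_mulC wtw mxtrace_scalar.
clearbody W.
have MMi : M *m Mi = 1%:M.
  rewrite /M /Mi mulmxDl !mulmxBr mulmxV // -!scalemxAr -!scalemxAl.
  rewrite YW WYi WW !scalerA.
  have E : (vol A)^-1 / r - c / vol A * vol A = c * r.
    by rewrite /c; field; rewrite vn0 rn0 r1n0.
  by rewrite -scalerBl E subrK.
have Mu : M \in unitmx by have [] := mulmx1_unit MMi.
have iM : invmx M = Mi by rewrite -[invmx M]mulmx1 -MMi mulKmx.
rewrite /Kreg Pw -/NB -/Y -/M iM /Mi raddfB /= mxtraceZ.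
rewrite trW /c.
by field; rewrite vn0 rn0 r1n0.
Qed.

Lemma Kreg_near : \forall r \near 0^'+,
  Kreg A r B = \sum_k (1 + r - lamR NB k)^-1 - r^-1.
Proof.
near=> r.
have r0 : 0 < r by near: r; exact: nbhs_right_gt.
have hs : forall k, lamR NB k != 1 + r.
  near: r; apply: filter_forall => k; exact: neq_near.
have [Yu trY] := trace_inv NB_sym hs.
by rewrite Kreg_tr // trY.
Unshelve. all: by end_near.
Qed.

Lemma Q_conj : invmx (Dmat A) *m B = invmx Td *m NB *m Td.
Proof.
rewrite invD invTd /NB -!mulmxA SdTd mulmx1.
by rewrite !mulmxA.
Qed.

Lemma Kemeny_B : Kemeny (invmx (Dmat A) *m B) = \sum_k (1 - lamR NB k)^-1.
Proof.
set t := [seq real_complex R (lamR NB k) | k <- index_enum 'I_n].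
have cpQ : char_poly (map_mx (real_complex R) (invmx (Dmat A) *m B))
    = \prod_(z <- t) ('X - z%:P).
  rewrite Q_conj [map_mx _ (_ *m Td)]map_mxM [map_mx _ (_ *m NB)]map_mxM map_invmx char_poly_similar; last first.
    by rewrite map_unitmx; have [] := mulmx1_unit (TdSd).
  by rewrite charpoly_NC ?NB_sym // big_map.
rewrite /Kemeny /eigs; case: closed_field_poly_normal => s /= Hs.
have Hs' : \prod_(z <- s) ('X - z%:P) = \prod_(z <- t) ('X - z%:P).
  by rewrite -cpQ [RHS]Hs (monicP (char_poly_monic _)) scale1r.
have pst := prod_XsubC_eq Hs'.
have -> : \sum_(z <- rem 1 s) (1 - z)^-1 = \sum_(z <- s) (1 - z)^-1.
  have [s1|s1] := boolP (1 \in s); last by rewrite rem_id.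
  by rewrite [RHS](perm_big _ (perm_to_rem s1)) big_cons /= subrr invr0 add0r.
rewrite (perm_big _ pst) big_map raddf_sum; apply: eq_bigr => k _.
by rewrite -(@rmorph1 _ _ (real_complex R)) -rmorphB -fmorphV.
Qed.

Lemma count1 : (\sum_k ((lamR NB k == 1)%R : nat))%N = \rank (kermx (1%:M - NB)).
Proof.
rewrite mxrank_ker rank_IN ?NB_sym //.
have : (\sum_k ((lamR NB k == 1)%R : nat) + \sum_k ((lamR NB k != 1)%R : nat))%N = n.
  rewrite -big_split /=.
  under eq_bigr do rewrite addnC addn_negb.
  by rewrite sum1_card card_ord.
lia.
Qed.

End Mat.

End Part3.
Import Part3.

Module Part4.
Set Implicit Arguments. Unset Strict Implicit. Unset Printing Implicit Defensive.
Local Open Scope ring_scope.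
Local Open Scope classical_set_scope.

Lemma const_connect n (E : rel 'I_n) (T : Type) (f : 'I_n -> T) :
  (forall k l, E k l -> f k = f l) -> forall k l, connect E k l -> f k = f l.
Proof.
move=> hE k l /connectP [p pp ->] {l}.
elim: p k pp => [|a p IH] k //= /andP[ka pa].
by rewrite (hE _ _ ka) (IH _ pa).
Qed.

Section Ker.
Variable R : realType.
Variable n : nat.
Variable A : 'M[R]_n.
Hypothesis dpos : forall k, 0 < deg A k.
Hypothesis volpos : 0 < vol A.
Variable B : 'M[R]_n.
Hypothesis Bsym : B^T = B.
Hypothesis Bdeg : forall k, \sum_l B k l = deg A k.
Hypothesis Bnn : forall k l, 0 <= B k l.

Local Notation Sd := (Dinvsqrt A).
Local Notation Td := (Dsqrt A).
Local Notation w := (Dsqrt A *m ones R n).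
Local Notation NB := (NB A B).

Lemma DSd : Dmat A *m Sd = Td.
Proof. by rewrite /Dmat /Dinvsqrt diag_mxC -/(Dmat A) SdD. Qed.

Lemma ker_form (x : 'rV[R]_n) :
  x *m (1%:M - NB) = (x *m Sd) *m (Dmat A - B) *m Sd.
Proof.
rewrite /NB !mulmxBr mulmxBl; congr (_ - _); last by rewrite !mulmxA.
by rewrite -!mulmxA DSd SdTd.
Qed.

Lemma lap_entry (y : 'rV[R]_n) l :
  (y *m (Dmat A - B)) 0 l = \sum_k B k l * (y 0 l - y 0 k).
Proof.
rewrite mulmxBr /Dmat mul_mx_diag !mxE.
rewrite [RHS](eq_bigr (fun k => B k l * y 0 l - y 0 k * B k l)); last first.
  by move=> k _; rewrite mulrBr [B k l * y 0 k]mulrC.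
rewrite sumrB -mulr_suml -Bdeg mulrC; congr (_ * _ - _).
by apply: eq_bigr => k _; rewrite -{1}Bsym mxE.
Qed.

Lemma lap_zero (y : 'rV[R]_n) : y *m (Dmat A - B) = 0 ->
  forall k l, 0 < B k l -> y 0 k = y 0 l.
Proof.
move=> hy.
have z l : \sum_k B k l * (y 0 l - y 0 k) = 0 by rewrite -lap_entry hy mxE.
have z' k : \sum_l B k l * (y 0 k - y 0 l) = 0.
  rewrite -[RHS](z k); apply: eq_bigr => l _.
  by rewrite -{1}Bsym mxE.
have E k l : B k l * (y 0 k - y 0 l)^+2 =
    y 0 k * (B k l * (y 0 k - y 0 l)) + y 0 l * (B k l * (y 0 l - y 0 k)).
  by ring.
have T1 : \sum_k \sum_l y 0 k * (B k l * (y 0 k - y 0 l)) = 0.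
  by rewrite big1 // => k _; rewrite -mulr_sumr z' mulr0.
have T2 : \sum_k \sum_l y 0 l * (B k l * (y 0 l - y 0 k)) = 0.
  by rewrite exchange_big big1 // => l _; rewrite -mulr_sumr z mulr0.
have S0 : \sum_k \sum_l B k l * (y 0 k - y 0 l)^+2 = 0.
  under eq_bigr do under eq_bigr do rewrite E.
  under eq_bigr do rewrite big_split /=.
  by rewrite big_split /= T1 T2 addr0.
have nn k l : 0 <= B k l * (y 0 k - y 0 l)^+2 by rewrite mulr_ge0 ?sqr_ge0.
move=> k l Bkl.
have /(_ k isT) := psumr_eq0P (fun k _ => sumr_ge0 _ (fun l _ => nn k l)) S0.
move=> /(psumr_eq0P (fun l _ => nn k l)) /(_ l isT) /eqP.
by rewrite mulf_eq0 gt_eqF //= sqrf_eq0 subr_eq0 => /eqP.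
Qed.

Lemma ker_sub (x : 'rV[R]_n) : (x <= kermx (1%:M - NB))%MS ->
  forall k l, 0 < B k l -> (x *m Sd) 0 k = (x *m Sd) 0 l.
Proof.
move/sub_kermxP => hx; apply: lap_zero.
have h : (x *m Sd) *m (Dmat A - B) *m Sd = 0 by rewrite -ker_form.
by rewrite -[LHS]mulmx1 -(SdTd dpos) mulmxA h mul0mx.
Qed.

Lemma w_ker : (w^T <= kermx (1%:M - NB))%MS.
Proof. by apply/sub_kermxP; rewrite mulmxBr mulmx1 (wNB dpos Bsym Bdeg) subrr. Qed.

Lemma w_neq0 (k0 : 'I_n) : w^T != 0.
Proof.
apply/eqP => /matrixP /(_ 0 k0); rewrite [_^T _ _]mxE w_entry mxE => /eqP.
by rewrite (negbTE (sqrt_neq0 dpos k0)).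
Qed.

Lemma yTd (y : 'rV[R]_n) k : (y *m Td) 0 k = y 0 k * Num.sqrt (deg A k).
Proof. by rewrite /Dsqrt mul_mx_diag !mxE. Qed.

Lemma xSdTd (x : 'rV[R]_n) : x = (x *m Sd) *m Td.
Proof. by rewrite -mulmxA (SdTd dpos) mulmx1. Qed.

Lemma rank_ker_conn (G : 'M[R]_n) (k0 : 'I_n) :
  (forall k l, connect (adjrel G) k l) ->
  (forall k l, 0 < G k l -> 0 < B k l) ->
  \rank (kermx (1%:M - NB)) = 1%N.
Proof.
move=> conn hG; apply/eqP; rewrite eqn_leq; apply/andP; split.
  have sub : (kermx (1%:M - NB) <= w^T)%MS.
    apply/row_subP => a; set x := row a _.
    have hx := ker_sub (row_sub a _).
    have cst k : (x *m Sd) 0 k = (x *m Sd) 0 k0.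
      apply: (@const_connect _ (adjrel G) _ (fun k => (x *m Sd) 0 k)) (conn k k0).
      by move=> k' l' h; apply: hx; apply: hG.
    apply/sub_rVP; exists ((x *m Sd) 0 k0); apply/rowP => k.
    rewrite [in RHS]mxE [w^T _ _]mxE w_entry {1}(xSdTd x) yTd cst //.
  by rewrite (leq_trans (mxrankS sub)) // rank_leq_row.
by rewrite (leq_trans _ (mxrankS w_ker)) // rank_rV (w_neq0 k0).
Qed.

Lemma rank_ker_cut (G : 'M[R]_n) (i j k0 : 'I_n) :
  (forall k, connect (adjrel G) i k \/ connect (adjrel G) j k) ->
  ~~ connect (adjrel G) i k0 ->
  (forall k l, 0 < G k l -> 0 < B k l) ->
  (forall k l, 0 < B k l -> connect (adjrel G) i k = connect (adjrel G) i l) ->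
  \rank (kermx (1%:M - NB)) = 2%N.
Proof.
move=> cover k0n hG clos.
set Ci := connect (adjrel G) i.
pose e1 : 'rV[R]_n := \row_k (Ci k)%:R.
pose e2 : 'rV[R]_n := \row_k (~~ Ci k)%:R.
apply/eqP; rewrite eqn_leq; apply/andP; split.
  pose U2 := col_mx (e1 *m Td) (e2 *m Td).
  have sub : (kermx (1%:M - NB) <= U2)%MS.
    apply/row_subP => a; set x := row a _.
    have hx := ker_sub (row_sub a _).
    set y := x *m Sd.
    have cst (c k : 'I_n) : connect (adjrel G) c k -> y 0 k = y 0 c.
      move=> ck; symmetry.
      apply: (@const_connect _ (adjrel G) _ (fun k => y 0 k)) ck.
      by move=> k' l' h; apply: hx; apply: hG.
    have ex : x = y *m Td by rewrite /y -xSdTd.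
    clearbody y.
    have -> : x = row_mx (y 0 i)%:M (y 0 j)%:M *m U2.
      rewrite mul_row_col !mul_scalar_mx (scalemxAl (y 0 i)) (scalemxAl (y 0 j)) -mulmxDl ex.
      congr (_ *m _); apply/rowP => k; rewrite !mxE.
      have [ci|ci] := boolP (Ci k).
        by rewrite mulr1 mulr0 addr0 (cst i).
      have hk : connect (adjrel G) j k by case: (cover k) => // h; rewrite /Ci h in ci.
      by rewrite mulr0 mulr1 add0r (cst j).
    exact: submxMl.
  by rewrite (leq_trans (mxrankS sub)) // rank_leq_row.
rewrite ltnNge; apply/negP => le1.
have wk := w_ker.
have rw : \rank w^T = 1%N by rewrite rank_rV (w_neq0 k0).
have kw : (kermx (1%:M - NB) <= w^T)%MS.
  have [h1 h2] := mxrank_leqif_sup wk.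
  by rewrite -h2 rw eqn_leq le1 -rw h1.
have zk : (e1 *m Td <= kermx (1%:M - NB))%MS.
  apply/sub_kermxP; rewrite ker_form -(mulmxA e1) (TdSd dpos) mulmx1.
  have -> : e1 *m (Dmat A - B) = 0; last by rewrite mul0mx.
  apply/rowP => l; rewrite lap_entry [RHS]mxE big1 // => k _.
  have [Bp|] := ltP 0 (B k l).
    by rewrite !mxE /Ci (clos _ _ Bp) subrr mulr0.
  move=> Bn; have -> : B k l = 0 by apply/eqP; rewrite eq_le Bn Bnn.
  by rewrite mul0r.
have /sub_rVP [c hc] := submx_trans zk kw.
have hi := congr1 (fun M : 'rV[R]_n => M 0 i) hc.
have hk := congr1 (fun M : 'rV[R]_n => M 0 k0) hc.
have wi := w_entry A i 0; have wk0 := w_entry A k0 0.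
move: (Dsqrt A *m ones R n) wi wk0 hi hk => W wi wk0.
rewrite /= !yTd !mxE wi wk0.
have Cii : Ci i = true by exact: connect0.
have Ck0 : Ci k0 = false by apply/negbTE.
rewrite Cii Ck0 mul1r mul0r.
move=> hi /esym /eqP; rewrite mulf_eq0 (negbTE (sqrt_neq0 dpos k0)) orbF => /eqP c0.
by move: hi; rewrite c0 mul0r => /eqP; rewrite (negbTE (sqrt_neq0 dpos i)).
Qed.

End Ker.

End Part4.
Import Part4.

Module Part5.
Set Implicit Arguments. Unset Strict Implicit. Unset Printing Implicit Defensive.
Local Open Scope ring_scope.
Local Open Scope classical_set_scope.

Section Graph.
Variable R : realType.
Variable n : nat.
Variable A : 'M[R]_n.
Variables i j : 'I_n.
Hypothesis Asym : A^T = A.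
Hypothesis Ann : forall k l, 0 <= A k l.
Hypothesis ij : i != j.

Local Notation Ah := (Ahat A i j).
Local Notation del := (delete_edge A i j).
Local Notation vv k := ((k == i)%:R - (k == j)%:R : R).

Lemma Asym_e k l : A k l = A l k.
Proof. by rewrite -{1}Asym mxE. Qed.

Lemma Ahat_entry k l : Ah k l = A k l + A i j * (vv k * vv l).
Proof.
rewrite /Ahat !mxE big_ord1 !mxE /=.
by rewrite !andbT.
Qed.

Lemma del_entry k l : del k l =
  if ((k == i) && (l == j)) || ((k == j) && (l == i)) then 0 else A k l.
Proof. by rewrite mxE. Qed.

Lemma Ahat_off k l : k != l -> Ah k l = del k l.
Proof.
move=> kl; rewrite Ahat_entry del_entry.
have ji : (j == i) = false by apply/negbTE; rewrite eq_sym.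
have ij' : (i == j) = false by apply/negbTE.
have [ki|ki] := eqVneq k i.
  subst k; rewrite ?eqxx ?ij' /=.
  have li : (l == i) = false by apply/negbTE; rewrite eq_sym.
  rewrite li /=.
  have [lj|lj] := eqVneq l j.
    by subst l; rewrite ?eqxx ?ij' ?ji /=; ring.
  by rewrite ?(negbTE lj) /=; ring.
have [kj|kj] := eqVneq k j.
  subst k; rewrite ?eqxx ?ji /=.
  have lj : (l == j) = false by apply/negbTE; rewrite eq_sym.
  rewrite lj /=.
  have [li|li] := eqVneq l i.
    by subst l; rewrite ?eqxx ?ij' ?ji (Asym_e j i) /=; ring.
  by rewrite ?(negbTE li) /=; ring.
by rewrite ?(negbTE ki) ?(negbTE kj) /=; ring.
Qed.

Lemma del_diag k : del k k = A k k.
Proof.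
rewrite del_entry.
case: (eqVneq k i) => [->|ki]; first by rewrite (negbTE ij) !andbF /=.
by rewrite ?andbF ?andbT /=; case: (k == j).
Qed.

Lemma Ahat_diag_ge k : A k k <= Ah k k.
Proof.
rewrite Ahat_entry lerDl mulr_ge0 //.
by rewrite -expr2 sqr_ge0.
Qed.

Lemma Ahat_sym : Ah^T = Ah.
Proof.
apply/matrixP => k l; rewrite mxE !Ahat_entry (Asym_e l k).
by congr (_ + _ * _); rewrite mulrC.
Qed.

Lemma Ahat_deg k : \sum_l Ah k l = deg A k.
Proof.
under eq_bigr do rewrite Ahat_entry.
rewrite big_split /= -mulr_sumr -mulr_sumr sumrB.
have s1 (c : 'I_n) : \sum_(l < n) ((l == c)%:R : R) = 1.
  by rewrite (bigD1 c) //= eqxx big1 ?addr0 // => l /negbTE ->.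
by rewrite !s1 subrr !mulr0 addr0.
Qed.

Lemma del_nn k l : 0 <= del k l.
Proof. by rewrite del_entry; case: ifP. Qed.

Lemma Ahat_nn k l : 0 <= Ah k l.
Proof.
have [->|kl] := eqVneq k l; first exact: le_trans (Ann l l) (Ahat_diag_ge l).
by rewrite Ahat_off // del_nn.
Qed.

Lemma del_Ahat_pos k l : 0 < del k l -> 0 < Ah k l.
Proof.
have [->|kl] := eqVneq k l; last by rewrite Ahat_off.
by rewrite del_diag => h; exact: lt_le_trans h (Ahat_diag_ge l).
Qed.

Lemma del_sym_rel : symmetric (adjrel del).
Proof.
move=> k l; rewrite /adjrel !del_entry (Asym_e l k).
by rewrite orbC (andbC (l == j)) (andbC (l == i)).
Qed.

Lemma Ahat_clos k l : 0 < Ah k l ->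
  connect (adjrel del) i k = connect (adjrel del) i l.
Proof.
have [->|kl] := eqVneq k l; first by [].
rewrite Ahat_off // => h.
have e : connect (adjrel del) k l by apply: connect1.
apply/idP/idP => hc; first exact: connect_trans hc e.
apply: connect_trans hc _.
by rewrite (sym_connect_sym del_sym_rel); exact: e.
Qed.

Lemma cover : connectedG A ->
  forall k, connect (adjrel del) i k \/ connect (adjrel del) j k.
Proof.
move=> conn k; have /connectP [p pp ->] := conn i k.
set P := fun x => connect (adjrel del) i x \/ connect (adjrel del) j x.
have gen : forall p a, path (adjrel A) a p -> P a -> P (last a p).
  elim=> [|b q IH] a //= /andP [ab pb] ha.
  apply: IH pb _.
  have [bi|bi] := eqVneq b i; first by left; rewrite bi connect0.
  have [bj|bj] := eqVneq b j; first by right; rewrite bj connect0.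
  have e : adjrel del a b by rewrite /adjrel del_entry (negbTE bi) (negbTE bj) !andbF.
  case: ha => h; [left|right]; exact: connect_trans h (connect1 e).
by apply: gen pp _; left; exact: connect0.
Qed.

End Graph.

End Part5.
Import Part5.

Module Part6.
Set Implicit Arguments. Unset Strict Implicit. Unset Printing Implicit Defensive.
Local Open Scope ring_scope.
Local Open Scope classical_set_scope.

Lemma lim_Gs (R : realType) (I : Type) (s : seq I) (P : pred I) (g : I -> R) :
  (forall x, P x -> g x != 1) ->
  (\sum_(x <- s | P x) (1 + r - g x)^-1) @[r --> 0^'+] --> \sum_(x <- s | P x) (1 - g x)^-1.
Proof.
move=> hg; elim: s => [|x t IH].
  by rewrite big_nil; under eq_fun do rewrite big_nil; exact: cvg_cst.
rewrite big_cons; under eq_fun do rewrite big_cons.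
case: (boolP (P x)) => Px; last by [].
apply: cvgD => //.
have H : (1 + r - g x) @[r --> 0^'+] --> 1 - g x.
  apply: cvg_at_right_filter.
  have -> : 1 - g x = 1 + 0 - g x by rewrite addr0.
  apply: cvgB; last exact: cvg_cst.
  apply: cvgD; [exact: cvg_cst | exact: cvg_id].
have x1' : 1 - g x != 0 by rewrite subr_eq0 eq_sym hg.
exact: (cvgV x1' H).
Qed.

Lemma cvg_near_eq (R : realType) (f g : R -> R) (l : R) :
  (\forall r \near 0^'+, f r = g r) ->
  g r @[r --> 0^'+] --> l -> f r @[r --> 0^'+] --> l.
Proof.
move=> e gl; apply: cvg_trans gl; apply: near_eq_cvg.
by apply: filterS e => r ->.
Qed.

Lemma cardP (n : nat) (P : pred 'I_n) : #|[pred k | P k]| = (\sum_k (P k : nat))%N.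
Proof.
rewrite -sum1_card big_mkcond /=; apply: eq_bigr => k _.
by rewrite inE; case: (P k).
Qed.

Section Pack.
Variable R : realType.
Variable n : nat.
Variable A : 'M[R]_n.
Hypothesis dpos : forall k, 0 < deg A k.
Hypothesis volpos : 0 < vol A.
Variable B : 'M[R]_n.
Hypothesis Bsym : B^T = B.
Hypothesis Bdeg : forall k, \sum_l B k l = deg A k.
Local Notation lam := (lamR (NB A B)).

Definition FB r := \sum_(k | lam k != 1) (1 + r - lam k)^-1.
Definition mB := #|[pred k | lam k == 1]|.

Lemma FB_cvg : FB r @[r --> 0^'+] --> Kemeny (invmx (Dmat A) *m B).
Proof.
rewrite (Kemeny_B dpos Bsym) (bigID (fun k => lam k == 1)) /= big1 ?add0r.
  by apply: lim_Gs.
by move=> k /eqP ->; rewrite subrr invr0.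
Qed.

Lemma FB_near : \forall r \near 0^'+, Kreg A r B = (mB%:R - 1) * r^-1 + FB r.
Proof.
apply: filterS2 (Kreg_near dpos volpos Bsym Bdeg) (nbhs_right_gt 0) => r -> r0.
rewrite (bigID (fun k => lam k == 1)) /= -/(FB r).
rewrite (eq_bigr (fun _ => r^-1)); last first.
  by move=> k /eqP ->; congr (_^-1); ring.
rewrite sumr_const -/mB -mulr_natl; ring.
Qed.

Lemma mB_rank : mB = \rank (kermx (1%:M - NB A B)).
Proof. by rewrite /mB cardP (count1 volpos Bsym). Qed.

End Pack.

End Part6.
Import Part6.

Local Open Scope ring_scope.
Local Open Scope classical_set_scope.

Theorem mainTheorem10 (R : realType) (n : nat) (A : 'M[R]_n) (i j : 'I_n) :
  A^T = A ->
  (forall k l, 0 <= A k l) ->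
  (forall k, 0 < deg A k) ->
  connectedG A ->
  i != j ->
  0 < A i j ->
  (* (a) *)
  (~ cut_edge A i j ->
     c_reg A i j r @[r --> 0^'+] --> c_score A i j) /\
  (* (b) *)
  (cut_edge A i j ->
     (r * c_reg A i j r) @[r --> 0^'+] --> (1 : R) /\
     exists L : R, (r^-1 - c_reg A i j r) @[r --> 0^'+] --> L) /\
  (* consequence for the filtered score *)
  (exists L : R, c_filtered A i j r @[r --> 0^'+] --> L) /\
  (~ cut_edge A i j ->
     c_filtered A i j r @[r --> 0^'+] --> c_score A i j).
Proof.
move=> Asym Ann dpos conn ij aij.
have volpos : 0 < vol A.
  rewrite /vol (bigD1 i) //=; apply: (lt_le_trans (dpos i)).
  by rewrite lerDl sumr_ge0 // => k _; exact: ltW.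
have Adeg : forall k, \sum_l A k l = deg A k by [].
have Ahsym : (Ahat A i j)^T = Ahat A i j by apply: Ahat_sym.
have Ahdeg : forall k, \sum_l Ahat A i j k l = deg A k by apply: Ahat_deg.
have Ahnn : forall k l, 0 <= Ahat A i j k l by apply: Ahat_nn.
have mA : mB A A = 1%N.
  rewrite (mB_rank volpos Asym).
  exact: (rank_ker_conn dpos Asym Adeg Ann i conn (fun k l h => h)).
have nearA := FB_near dpos volpos Asym Adeg.
have nearH := FB_near dpos volpos Ahsym Ahdeg.
have cvA := FB_cvg dpos Asym.
have cvH := FB_cvg dpos Ahsym.
have partA : ~ cut_edge A i j -> c_reg A i j r @[r --> 0^'+] --> c_score A i j.
  move=> nc.
  have cd : connectedG (delete_edge A i j).
    by case: (pselect (connectedG (delete_edge A i j))) => // h; exfalso; exact: nc.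
  have mH : mB A (Ahat A i j) = 1%N.
    rewrite (mB_rank volpos Ahsym).
    exact: (rank_ker_conn dpos Ahsym Ahdeg Ahnn i cd (fun k l h => del_Ahat_pos Asym Ann ij h)).
  apply: (@cvg_near_eq _ _ (fun r => FB A (Ahat A i j) r - FB A A r)).
    apply: filterS2 nearA nearH => r eA eH.
    by rewrite /c_reg eH eA mA mH; ring.
  exact: cvgB cvH cvA.
have partB : cut_edge A i j ->
     (r * c_reg A i j r) @[r --> 0^'+] --> (1 : R) /\
     exists L : R, (r^-1 - c_reg A i j r) @[r --> 0^'+] --> L.
  move=> ct.
  have [k0 k0n] : exists k0, ~~ connect (adjrel (delete_edge A i j)) i k0.
    case: (pselect (exists k0, ~~ connect (adjrel (delete_edge A i j)) i k0)) => // no.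
    exfalso; apply: ct => k l.
    have all k' : connect (adjrel (delete_edge A i j)) i k'.
      by apply/negPn/negP => h; apply: no; exists k'.
    apply: connect_trans (all l).
    by rewrite (sym_connect_sym (del_sym_rel i j Asym)); exact: all.
  have mH : mB A (Ahat A i j) = 2%N.
    rewrite (mB_rank volpos Ahsym).
    exact: (rank_ker_cut dpos Ahsym Ahdeg Ahnn (cover i j conn) k0n
      (fun k l h => del_Ahat_pos Asym Ann ij h) (fun k l h => Ahat_clos Asym ij h)).
  have ecr : \forall r \near 0^'+,
      c_reg A i j r = r^-1 + (FB A (Ahat A i j) r - FB A A r).
    apply: filterS2 nearA nearH => r eA eH.
    by rewrite /c_reg eH eA mA mH; ring.
  split.
    have H : (1 + r * (FB A (Ahat A i j) r - FB A A r)) @[r --> 0^'+] -->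
        1 + 0 * (Kemeny (invmx (Dmat A) *m Ahat A i j) - Kemeny (invmx (Dmat A) *m A)).
      apply: cvgD; first exact: cvg_cst.
      apply: cvgM; last exact: cvgB cvH cvA.
      exact: (cvg_at_right_filter (f := id) cvg_id).
    rewrite mul0r addr0 in H.
    apply: cvg_near_eq H.
    apply: filterS2 ecr (nbhs_right_gt 0) => r -> r0.
    by field; rewrite gt_eqF.
  exists (Kemeny (invmx (Dmat A) *m A) - Kemeny (invmx (Dmat A) *m Ahat A i j)).
  apply: (@cvg_near_eq _ _ (fun r => FB A A r - FB A (Ahat A i j) r)).
    by apply: filterS ecr => r ->; ring.
  exact: cvgB cvA cvH.
split => //; split => //; split.
  case: (pselect (cut_edge A i j)) => ct.
    have [_ [L HL]] := partB ct.
    exists L; rewrite /c_filtered (asboolT ct) /=; exact: HL.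
  exists (c_score A i j); rewrite /c_filtered (asboolF ct) /=; exact: partA.
by move=> nc; rewrite /c_filtered (asboolF nc) /=; exact: partA.
Qed.
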